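(* Let $V$ be an $n$-dimensional vector space over a field $\mathbb{F}$, and let $k\leq n/2$. If $K$ and $L$ are nonzero subspaces of $\bigwedge^{k}V$ such that $x\wedge y=0$ for every $x\in K$ and $y\in L$, then \[ \dim K+\dim L\leq\binom{n}{k}-\binom{n-k}{k}+1. \]
   Context: $\bigwedge V$ denotes the exterior algebra of $V$ and $\bigwedge^{k}V$ its degree-$k$ component. Subspaces $K,L$ with $K\wedge L=0$ are called cross-annihilating. The paper assumes throughout, for expository purposes, that the characteristic of $\mathbb{F}$ is not $2$. *)

(* Defs.v *)
From HB Require Import structures.
From mathcomp Require Import all_boot all_order all_algebra.
Set Implicit Arguments. Unset Strict Implicit. Unset Printing Implicit Defensive.
Import Order.TTheory GRing.Theory Num.Theory.
Local Open Scope ring_scope.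

(* Exterior algebra of V = F^n, with basis e_A indexed by subsets A of 'I_n;
   e_A stands for e_{a_1} /\ ... /\ e_{a_m} with a_1 < ... < a_m. *)
Definition ext (F : fieldType) (n : nat) := {ffun {set 'I_n} -> F^o}.

Definition ext_basis (F : fieldType) (n : nat) (A : {set 'I_n}) : ext F n :=
  [ffun C => (C == A)%:R].

(* sign of e_A /\ e_B = sign A B * e_(A :|: B) for disjoint A B:
   (-1)^(number of pairs (a,b), a in A, b in B, b < a) *)
Definition wsign (F : fieldType) (n : nat) (A B : {set 'I_n}) : F :=
  (-1) ^+ #|[set p : 'I_n * 'I_n | [&& p.1 \in A, p.2 \in B & (p.2 < p.1)%N]]|.

Definition wedge (F : fieldType) (n : nat) (x y : ext F n) : ext F n :=
  [ffun C => \sum_(A : {set 'I_n}) \sum_(B : {set 'I_n})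
     if [disjoint A & B] && (A :|: B == C)
     then wsign F A B * (x A : F) * (y B : F) else 0].

Definition ext_deg (F : fieldType) (n k : nat) : {vspace ext F n} :=
  <<[seq ext_basis F A | A <- enum [set A : {set 'I_n} | #|A| == k]]>>%VS.

(* Main.v *)
Require Import Defs.
From HB Require Import structures.
From mathcomp Require Import all_boot all_order all_algebra.
From mathcomp Require Import zify.
From Stdlib Require Import ClassicalEpsilon.
Set Implicit Arguments. Unset Strict Implicit. Unset Printing Implicit Defensive.

Section Comb.
Variable N : nat.
Local Notation T := 'I_N.
Implicit Types (F H : {set {set T}}) (A B : {set T}).

Definition G (m : nat) : {set T} := [set i : T | (i < m)%N].

Lemma card_G m : (m <= N)%N -> #|G m| = m.
Proof.
move=> mN.
have -> : G m = [set widen_ord mN i | i : 'I_m].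
  apply/setP=> x; rewrite !inE; apply/idP/imsetP.
    by move=> xm; exists (Ordinal xm) => //; apply: val_inj.
  by case=> i _ ->; rewrite /= ltn_ord.
rewrite card_imset ?card_ord //.
by move=> i j /(congr1 val) /= /val_inj.
Qed.

Definition kfam m k (F : {set {set T}}) :=
  forall A, A \in F -> A \subset G m /\ #|A| = k.
Definition cross (F H : {set {set T}}) :=
  forall A B, A \in F -> B \in H -> ~~ [disjoint A & B].
Definition shifted (F : {set {set T}}) :=
  [forall A, forall i : T, forall j : T,
     [&& A \in F, j \in A, i \notin A & (i < j)%N] ==> (i |: (A :\ j) \in F)].

Lemma shiftedP (F : {set {set T}}) : reflect (forall (A : {set T}) (i j : T), A \in F -> j \in A -> i \notin A ->
   (i < j)%N -> i |: (A :\ j) \in F) (shifted F).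
Proof.
apply: (iffP forallP) => [H A i j AF jA iA ij|H A].
  by move: (H A) => /forallP /(_ i) /forallP /(_ j); rewrite AF jA iA ij.
apply/forallP=> i; apply/forallP=> j; apply/implyP=> /and4P[AF jA iA ij].
exact: H.
Qed.

Lemma cross_sym (F H : {set {set T}}) : cross F H -> cross H F.
Proof. by move=> c A B AH BF; rewrite disjoint_sym c. Qed.

Lemma card_ksub (B : {set T}) k :
  #|[set A : {set T} | A \subset B & #|A| == k]| = 'C(#|B|, k).
Proof. exact: cards_draws. Qed.


Lemma disjP (U : finType) (A B : {set U}) :
  reflect (forall x, x \in A -> x \notin B) [disjoint A & B].
Proof.
rewrite disjoint_subset; apply: (iffP subsetP) => H x xA.
  by have := H x xA; rewrite !inE.
by rewrite !inE H.
Qed.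

Lemma exists_out (S : {set T}) M : (M <= N)%N -> (#|S| < M)%N ->
  exists i : T, (i < M)%N /\ i \notin S.
Proof.
move=> MN SM.
have : ~~ (G M \subset S).
  apply/negP=> /subset_leq_card; rewrite card_G //; lia.
by case/subsetPn=> i; rewrite inE => iM iS; exists i.
Qed.

Lemma kfam0_false m (F H : {set {set T}}) :
  kfam m 0 F -> kfam m 0 H -> cross F H -> F != set0 -> H != set0 -> False.
Proof.
move=> kF kH c /set0Pn[A AF] /set0Pn[B BH].
have := c A B AF BH.
have [_ /cards0_eq ->] := kF A AF.
by move/negP; apply; apply/disjP=> x; rewrite inE.
Qed.

Definition KS m k : {set {set T}} := [set A : {set T} | A \subset G m & #|A| == k].

Lemma card_KS m k : (m <= N)%N -> #|KS m k| = 'C(m, k).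
Proof. by move=> mN; rewrite /KS cards_draws card_G. Qed.

Lemma kfam_KS m k F : kfam m k F -> F \subset KS m k.
Proof.
by move=> kF; apply/subsetP=> A /kF [As Ak]; rewrite inE As Ak eqxx.
Qed.

Lemma compK (S A : {set T}) : A \subset S -> S :\: (S :\: A) = A.
Proof.
move=> sA; apply/setP=> x; rewrite !inE.
case: (boolP (x \in A)) => xA; first by rewrite (subsetP sA _ xA).
by case: (x \in S).
Qed.

Lemma base_case k (F H : {set {set T}}) : (k.*2 <= N)%N ->
  kfam k.*2 k F -> kfam k.*2 k H -> cross F H ->
  (#|F| + #|H| <= 'C(k.*2, k))%N.
Proof.
move=> kN kF kH c.
pose comp (A : {set T}) := G k.*2 :\: A.
have inj : {in F &, injective comp}.
  move=> A B /kF[As _] /kF[Bs _] e.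
  by rewrite -(compK As) -/(comp A) e /comp compK.
have cF : [disjoint comp @: F & H].
  apply/disjP=> C /imsetP[A AF ->]; apply/negP=> CH.
  move: (c A _ AF CH); case/negP; apply/disjP=> x xA.
  by rewrite inE xA.
have sub : comp @: F :|: H \subset KS k.*2 k.
  rewrite subUset (kfam_KS kH) andbT; apply/subsetP=> C /imsetP[A AF ->].
  have [As Ak] := kF A AF.
  rewrite inE subsetDl /= cardsD (setIidPr As) card_G // Ak; apply/eqP; lia.
have := subset_leq_card sub.
by rewrite cardsU (disjoint_setI0 cF) cards0 subn0 card_in_imset // card_KS.
Qed.


Section Split.
Variables (M : nat) (t : T).
Hypothesis ht : val t = M.
Hypothesis MN : (M < N)%N.

Definition F0 (F : {set {set T}}) := [set A in F | t \notin A].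
Definition F1 (F : {set {set T}}) := [set A :\ t | A in [set A in F | t \in A]].

Lemma card_split F : #|F| = (#|F0 F| + #|F1 F|)%N.
Proof.
rewrite /F1 card_in_imset; last first.
  move=> A B; rewrite !inE => /andP[_ tA] /andP[_ tB] e.
  by rewrite -(setD1K tA) -(setD1K tB) e.
rewrite -(cardsID [set A : {set T} | t \in A] F) addnC; congr (_ + _)%N; apply: eq_card => A;
  by rewrite !inE andbC.
Qed.

Lemma lt_t (x : T) : (x < M.+1)%N -> x != t -> (x < M)%N.
Proof.
move=> xM xt; have : val x != M by apply: contra xt => /eqP e; apply/eqP/val_inj; rewrite e ht.
by move=> h; rewrite ltn_neqAle h -ltnS.
Qed.

Lemma kfam_F0 k F : kfam M.+1 k F -> kfam M k (F0 F).
Proof.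
move=> kF A; rewrite inE => /andP[/kF[As Ak] tA]; split=> //.
apply/subsetP=> x xA; rewrite inE lt_t //; first by have := subsetP As x xA; rewrite inE.
by apply: contraNneq tA => <-.
Qed.

Lemma kfam_F1 k F : kfam M.+1 k.+1 F -> kfam M k (F1 F).
Proof.
move=> kF A' /imsetP[A]; rewrite inE => /andP[/kF[As Ak] tA] ->; split.
  apply/subsetP=> x; rewrite in_setD1 => /andP[xt xA]; rewrite inE lt_t //.
  by have := subsetP As x xA; rewrite inE.
by move: Ak; rewrite (cardsD1 t) tA => -[].
Qed.

Lemma shifted_F0 k F : kfam M.+1 k F -> shifted F -> shifted (F0 F).
Proof.
move=> kF /shiftedP sF; apply/shiftedP=> A i j; rewrite inE => /andP[AF tA] jA iA ij.
rewrite inE sF //= in_setU1 in_setD1 (negbTE tA) andbF orbF.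
apply/eqP=> ti; have [As _] := kF A AF.
have := subsetP As j jA; rewrite inE; move: ij; rewrite -ti ht; lia.
Qed.

Lemma shifted_F1 k F : kfam M.+1 k F -> shifted F -> shifted (F1 F).
Proof.
move=> kF /shiftedP sF; apply/shiftedP=> A' i j /imsetP[A]; rewrite inE => /andP[AF tA] ->.
rewrite in_setD1 => /andP[jt jA] iA' ij.
have [As _] := kF A AF.
have jM : (j < M)%N by apply: lt_t => //; have := subsetP As j jA; rewrite inE.
have it : i != t by apply/eqP=> e; move: ij; rewrite e ht; lia.
have iA : i \notin A by move: iA'; rewrite in_setD1 it.
apply/imsetP; exists (i |: (A :\ j)).
  by rewrite inE sF //= in_setU1 in_setD1 [t == j]eq_sym jt tA orbT.
apply/setP=> x; rewrite !(in_setU1, in_setD1).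
by case: (eqVneq x i) => [->|]; rewrite ?it //= andbCA.
Qed.

Lemma F0_nonempty k F : (k.*2 <= M)%N -> kfam M.+1 k F -> shifted F ->
  F != set0 -> F0 F != set0.
Proof.
move=> kM kF /shiftedP sF /set0Pn[A AF]; apply/set0Pn.
case: (boolP (t \in A)) => tA; last by exists A; rewrite inE AF.
have [As Ak] := kF A AF.
have k0 : (0 < k)%N by rewrite -Ak card_gt0; apply/set0Pn; exists t.
have AM : (#|A| < M)%N by rewrite Ak; lia.
have [i [iM iA]] := exists_out (ltnW MN) AM.
exists (i |: (A :\ t)); rewrite inE sF ?ht //= in_setU1 in_setD1 eqxx /= orbF.
by apply/eqP=> e; move: iM; rewrite -e ht ltnn.
Qed.

Lemma cross_F0 F H : cross F H -> cross (F0 F) (F0 H).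
Proof. by move=> c A B; rewrite !inE => /andP[AF _] /andP[BH _]; apply: c. Qed.

Lemma cross_F1_F0 F H : cross F H -> cross (F1 F) (F0 H).
Proof.
move=> c A' B /imsetP[A]; rewrite inE => /andP[AF tA] ->; rewrite inE => /andP[BH tB].
apply: contra (c A B AF BH) => /disjP d; apply/disjP=> x xA.
case: (eqVneq x t) => [->|xt] //; apply: d; by rewrite in_setD1 xt.
Qed.

Lemma cross_F1 k F H : (k.*2 < M)%N -> kfam M.+1 k.+1 F -> kfam M.+1 k.+1 H ->
  shifted H -> cross F H -> cross (F1 F) (F1 H).
Proof.
move=> kM kF kH /shiftedP sH c A' B' A'F B'H; apply/negP=> d.
have [A's A'k] := kfam_F1 kF A'F.
have [B's B'k] := kfam_F1 kH B'H.
case/imsetP: A'F => A; rewrite inE => /andP[AF tA] eA.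
case/imsetP: B'H => B; rewrite inE => /andP[BH tB] eB.
have ABM : (#|A' :|: B'| < M)%N by rewrite cardsU A'k B'k; lia.
have [i [iM iAB]] := exists_out (ltnW MN) ABM.
have it : i != t by apply/eqP=> e; move: iM; rewrite e ht ltnn.
move: iAB; rewrite in_setU negb_or => /andP[iA' iB'].
have iB : i \notin B by move: iB'; rewrite eB in_setD1 it.
have itl : (i < t)%N by rewrite ht.
move: (c A _ AF (sH B i t BH tB iB itl)) => /negP; apply; apply/disjP=> x xA; rewrite in_setU1 negb_or -eB.
case: (eqVneq x t) => [->|xt].
  by rewrite eq_sym it eB in_setD1 eqxx.
have xA' : x \in A' by rewrite eA in_setD1 xt.
rewrite (disjointFr d xA') andbT.
by apply: contraNneq iA' => <-.
Qed.

End Split.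


Definition X M k B0 : {set {set T}} := [set C : {set T} | C \subset G M :\: B0 & #|C| == k].

Lemma card_KSX M k B0 : (M <= N)%N -> B0 \subset G M ->
  #|KS M k :\: X M k B0| = ('C(M, k) - 'C(M - #|B0|, k))%N.
Proof.
move=> MN B0s.
have XK : X M k B0 \subset KS M k.
  apply/subsetP=> C; rewrite !inE => /andP[Cs ->]; rewrite andbT.
  exact: subset_trans Cs (subsetDl _ _).
rewrite cardsD (setIidPr XK) card_KS // /X cards_draws cardsD (setIidPr B0s) card_G //.
Qed.

Definition combP m := forall k F H, (k.*2 <= m)%N -> (m <= N)%N ->
  kfam m k F -> kfam m k H -> shifted F -> shifted H -> cross F H ->
  F != set0 -> H != set0 ->
  (#|F| + #|H| <= 'C(m, k) - 'C(m - k, k) + 1)%N.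

Lemma bin_facts M k : (k.+1.*2 <= M)%N ->
  [/\ 'C(M.+1, k.+1) = ('C(M, k.+1) + 'C(M, k))%N,
      M.+1 - k.+1 = M - k,
      'C(M - k, k.+1) = ('C(M - k.+1, k.+1) + 'C(M - k.+1, k))%N,
      ('C(M - k.+1, k.+1) <= 'C(M, k.+1))%N &
      ('C(M - k.+1, k) <= 'C(M, k))%N].
Proof.
move=> kM; split=> //.
- have -> : (M - k = (M - k.+1).+1)%N by lia.
  by rewrite binS.
- by apply: leq_bin2l; apply: leq_subr.
- by apply: leq_bin2l; apply: leq_subr.
Qed.


Lemma caseB M k (IH : combP M) F H (t : T) : val t = M -> (M < N)%N ->
  (k.+1.*2 <= M)%N -> kfam M.+1 k.+1 F -> kfam M.+1 k.+1 H ->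
  shifted F -> shifted H -> cross F H -> F != set0 -> H != set0 ->
  F1 t H = set0 ->
  (#|F| + #|H| <= 'C(M.+1, k.+1) - 'C(M.+1 - k.+1, k.+1) + 1)%N.
Proof.
move=> ht MN kM kF kH sF sH c Fn Hn H1.
have kM' : (k.+1.*2 <= M.+1)%N by lia.
have IH0 := IH k.+1 (F0 t F) (F0 t H) kM (ltnW MN) (kfam_F0 ht kF) (kfam_F0 ht kH)
  (shifted_F0 ht MN kF sF) (shifted_F0 ht MN kH sH) (cross_F0 c)
  (F0_nonempty ht MN kM kF sF Fn) (F0_nonempty ht MN kM kH sH Hn).
have [B0 B0H] := set0Pn _ (F0_nonempty ht MN kM kH sH Hn).
have [B0s B0k] := kfam_F0 ht kH B0H.
have F1sub : F1 t F \subset KS M k :\: X M k B0.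
  apply/subsetP=> A' A'F; have [A's A'k] := kfam_F1 ht kF A'F.
  rewrite !inE A's A'k eqxx /= andbT subsetD A's /=.
  by rewrite andbT (cross_F1_F0 c A'F B0H).
have := subset_leq_card F1sub; rewrite card_KSX //; last exact: ltnW.
rewrite B0k => F1le.
rewrite (card_split t F) (card_split t H) H1 cards0 addn0.
have [e1 e2 e3 l1 l2] := bin_facts kM.
rewrite e1 e2 e3; move: IH0 F1le; lia.
Qed.

Lemma caseAB M k (IH : combP M) F H (t : T) : val t = M -> (M < N)%N ->
  (k.+1.*2 <= M)%N -> kfam M.+1 k.+1 F -> kfam M.+1 k.+1 H ->
  shifted F -> shifted H -> cross F H -> F != set0 -> H != set0 ->
  F1 t F != set0 -> F1 t H != set0 ->
  (#|F| + #|H| <= 'C(M.+1, k.+1) - 'C(M.+1 - k.+1, k.+1) + 1)%N.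
Proof.
move=> ht MN kM kF kH sF sH c Fn Hn F1n H1n.
have IH0 := IH k.+1 (F0 t F) (F0 t H) kM (ltnW MN) (kfam_F0 ht kF) (kfam_F0 ht kH)
  (shifted_F0 ht MN kF sF) (shifted_F0 ht MN kH sH) (cross_F0 c)
  (F0_nonempty ht MN kM kF sF Fn) (F0_nonempty ht MN kM kH sH Hn).
have c1 : cross (F1 t F) (F1 t H).
  by apply: (cross_F1 (k := k) ht MN) => //; move: kM; rewrite !doubleS; lia.
case: k kM kF kH IH0 c1 => [|k'] kM kF kH IH0 c1.
  by case: (kfam0_false (kfam_F1 ht kF) (kfam_F1 ht kH) c1 F1n H1n).
have kM2 : (k'.+1.*2 <= M)%N by move: kM; rewrite !doubleS; lia.
have IH1 := IH k'.+1 (F1 t F) (F1 t H) kM2 (ltnW MN) (kfam_F1 ht kF) (kfam_F1 ht kH)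
  (shifted_F1 ht MN kF sF) (shifted_F1 ht MN kH sH) c1 F1n H1n.
have [e1 e2 e3 l1 l2] := bin_facts kM.
have e4 : 'C(M - k'.+1, k'.+1) = ('C(M - k'.+2, k'.+1) + 'C(M - k'.+2, k'))%N.
  have -> : (M - k'.+1 = (M - k'.+2).+1)%N by move: kM; rewrite !doubleS; lia.
  by rewrite binS.
have g1 : (0 < 'C(M - k'.+2, k'))%N by rewrite bin_gt0; move: kM; rewrite !doubleS; lia.
have l3 : ('C(M - k'.+1, k'.+1) <= 'C(M, k'.+1))%N by apply: leq_bin2l; apply: leq_subr.
rewrite (card_split t F) (card_split t H) e1 e2 e3.
move: IH0 IH1 l3 l1 g1; rewrite e4. move: (#|F0 t F|) (#|F0 t H|) (#|F1 t F|) (#|F1 t H|) ('C(M, k'.+2)) ('C(M, k'.+1)) ('C(M - k'.+2, k'.+2)) ('C(M - k'.+2, k'.+1)) ('C(M - k'.+2, k')). clear. lia.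
Qed.


Lemma comb_main m : combP m.
Proof.
elim: m => [|M IH] k F H km mN kF kH sF sH c Fn Hn.
  have k0 : k = 0%N by move: km; rewrite leqn0 double_eq0 => /eqP.
  by subst k; case: (kfam0_false kF kH c Fn Hn).
case: k km kF kH => [|k] km kF kH.
  by case: (kfam0_false kF kH c Fn Hn).
have [lt|eq] : (k.+1.*2 < M.+1)%N \/ (k.+1.*2 = M.+1)%N.
  by move: km; rewrite leq_eqVlt => /orP[/eqP|]; [right|left].
2: {
  have := base_case (_ : k.+1.*2 <= N)%N (_ : kfam k.+1.*2 k.+1 F) (_ : kfam k.+1.*2 k.+1 H) c.
  rewrite eq => /(_ mN kF kH) b.
  have -> : (M.+1 - k.+1 = k.+1)%N by move: eq; rewrite -addnn; lia.
  by rewrite binn; lia. }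
have kM : (k.+1.*2 <= M)%N by rewrite -ltnS.
have MN : (M < N)%N by [].
pose t : T := Ordinal MN.
have ht : val t = M by [].
case: (eqVneq (F1 t H) set0) => H1.
  exact: (caseB IH ht).
case: (eqVneq (F1 t F) set0) => F1.
  rewrite addnC; apply: (caseB IH ht) => //; exact: cross_sym.
exact: (caseAB IH ht).
Qed.


Section Shift.
Variables (i j : T).
Hypothesis ij : (i < j)%N.

Lemma inej : i != j.
Proof. by apply/eqP=> e; move: ij; rewrite e ltnn. Qed.

Definition sh A := i |: (A :\ j).
Definition phi F A := if [&& j \in A, i \notin A & sh A \notin F] then sh A else A.
Definition Sh F := phi F @: F.

Lemma sh_inv A : j \in A -> i \notin A -> j |: (sh A :\ i) = A.
Proof.
move=> jA iA; apply/setP=> x; rewrite !(in_setU1, in_setD1).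
case: (eqVneq x j) => [->|xj] //=; case: (eqVneq x i) => [->|xi] //=.
by rewrite (negbTE iA).
Qed.

Lemma card_sh A : j \in A -> i \notin A -> #|sh A| = #|A|.
Proof.
move=> jA iA; rewrite /sh cardsU1 in_setD1 (negbTE iA) andbF /=.
by rewrite [in RHS](cardsD1 j) jA.
Qed.

Lemma phi_inj F : {in F &, injective (phi F)}.
Proof.
move=> A B AF BF; rewrite /phi.
case: (boolP [&& j \in A, i \notin A & sh A \notin F]) => [/and3P[jA iA sA]|nA];
case: (boolP [&& j \in B, i \notin B & sh B \notin F]) => [/and3P[jB iB sB]|nB] //.
- by move=> e; rewrite -(sh_inv jA iA) -(sh_inv jB iB) e.
- by move=> e; move: sA; rewrite e BF.
- by move=> e; move: sB; rewrite -e AF.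
Qed.

Lemma card_Sh F : #|Sh F| = #|F|.
Proof. exact: card_in_imset (@phi_inj F). Qed.

Lemma kfam_Sh k F : kfam N k F -> kfam N k (Sh F).
Proof.
move=> kF A' /imsetP[A AF ->]; have [As Ak] := kF A AF; split.
  by apply/subsetP=> x _; rewrite inE ltn_ord.
rewrite /phi; case: ifP => // /and3P[jA iA _]; by rewrite card_sh.
Qed.

Lemma meet A B x : x \in A -> x \in B -> ~~ [disjoint A & B].
Proof. by move=> xA xB; apply/negP=> /disjP d; move: (d x xA); rewrite xB. Qed.

Lemma nd_ex A B : ~~ [disjoint A & B] -> exists2 x, x \in A & x \in B.
Proof. by rewrite -setI_eq0 => /set0Pn[x]; rewrite inE => /andP[]; exists x. Qed.

Lemma cross_half F H A B : cross F H -> A \in F -> B \in H ->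
  j \in A -> i \notin A -> ~~ [disjoint sh A & phi H B].
Proof.
move=> c AF BH jA iA; rewrite /phi.
case: ifP => [_|nB]; first by apply: (meet (x := i)); rewrite /sh setU11.
case: (boolP (i \in B)) => iB; first by apply: (meet (x := i)); rewrite /sh ?setU11.
case: (boolP (j \in B)) => jB; last first.
  have [x xA xB] := nd_ex (c A B AF BH).
  apply: (meet (x := x)) => //; rewrite /sh in_setU1 in_setD1 xA andbT.
  by apply/orP; right; apply: contraNneq jB => <-.
have sBH : sh B \in H by move: nB; rewrite jB iB /= => /negbFE.
have [x xA xB] := nd_ex (c A _ AF sBH).
have xi : x != i by apply: contraNneq iA => <-.
move: xB; rewrite /sh in_setU1 (negbTE xi) /= in_setD1 => /andP[xj xB].
by apply: (meet (x := x)) => //; rewrite /sh in_setU1 in_setD1 xj xA orbT.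
Qed.

Lemma cross_Sh F H : cross F H -> cross (Sh F) (Sh H).
Proof.
move=> c A' B' /imsetP[A AF ->] /imsetP[B BH ->].
rewrite {1}/phi; case: ifP => [/and3P[jA iA _]|nA]; first exact: (cross_half c AF BH jA iA).
rewrite disjoint_sym /phi; case: ifP => [/and3P[jB iB _]|nB].
  by move: (cross_half (cross_sym c) BH AF jB iB); rewrite /phi nA.
by rewrite disjoint_sym; apply: c.
Qed.

Definition ws A := (\sum_(x in A) val x)%N.
Definition wt F := (\sum_(A in F) ws A)%N.

Lemma ws_sh A : j \in A -> i \notin A -> (ws (sh A) + j = ws A + i)%N.
Proof.
move=> jA iA; rewrite /ws /sh big_setU1 /=; last by rewrite in_setD1 (negbTE iA) andbF.
rewrite [in RHS](big_setD1 j jA) /= [RHS]addnC -addnA; congr (_ + _); rewrite addnC; congr (_ + _).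
Qed.

Lemma ws_phi F A : (ws (phi F A) <= ws A)%N.
Proof.
rewrite /phi; case: ifP => // /and3P[jA iA _].
by have := ws_sh jA iA; lia.
Qed.

Lemma wt_Sh F : wt (Sh F) = (\sum_(A in F) ws (phi F A))%N.
Proof. by rewrite /wt /Sh big_imset //; exact: phi_inj. Qed.

Lemma wt_Sh_le F : (wt (Sh F) <= wt F)%N.
Proof. by rewrite wt_Sh; apply: leq_sum => A _; apply: ws_phi. Qed.

Lemma wt_Sh_lt F A : A \in F -> j \in A -> i \notin A -> sh A \notin F ->
  (wt (Sh F) < wt F)%N.
Proof.
move=> AF jA iA sA; rewrite wt_Sh /wt (bigD1 A AF) [X in (_ < X)%N](bigD1 A AF) /=.
have h1 : (ws (phi F A) < ws A)%N.
  rewrite /phi jA iA sA /=; have := ws_sh jA iA; lia.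
have h2 := @leq_sum _ (index_enum _) (fun B => (B \in F) && (B != A)) _ _ (fun B _ => ws_phi F B).
by have := leq_add h1 h2; rewrite addSn.
Qed.

End Shift.


Lemma shift_step k F H : ~~ shifted F -> kfam N k F -> kfam N k H -> cross F H ->
  exists F' H', [/\ (wt F' + wt H' < wt F + wt H)%N, #|F'| = #|F|, #|H'| = #|H|,
    kfam N k F' /\ kfam N k H' & cross F' H'].
Proof.
move=> /forallPn[A /forallPn[i /forallPn[j]]].
rewrite negb_imply => /andP[/and4P[AF jA iA ij] sA].
exists (Sh i j F), (Sh i j H); split.
- have := wt_Sh_lt ij AF jA iA sA; have := wt_Sh_le ij H; lia.
- exact: card_Sh.
- exact: card_Sh.
- by split; apply: kfam_Sh.
- exact: cross_Sh.
Qed.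

Lemma reduce k : (k.*2 <= N)%N -> forall w F H, (wt F + wt H < w)%N ->
  kfam N k F -> kfam N k H -> cross F H -> F != set0 -> H != set0 ->
  (#|F| + #|H| <= 'C(N, k) - 'C(N - k, k) + 1)%N.
Proof.
move=> kN; elim=> [|w IH] F H hw kF kH c Fn Hn; first by [].
case: (boolP (shifted F)) => sF; last first.
  have [F' [H' [hw' eF eH [kF' kH'] c']]] := shift_step sF kF kH c.
  rewrite -eF -eH; apply: IH => //; first lia.
    by rewrite -card_gt0 eF card_gt0.
  by rewrite -card_gt0 eH card_gt0.
case: (boolP (shifted H)) => sH; last first.
  have [H' [F' [hw' eH eF [kH' kF'] c']]] := shift_step sH kH kF (cross_sym c).
  rewrite -eF -eH; apply: IH => //; first lia.
  - exact: cross_sym.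
  - by rewrite -card_gt0 eF card_gt0.
  - by rewrite -card_gt0 eH card_gt0.
exact: comb_main.
Qed.

Lemma comb_final k (F H : {set {set 'I_N}}) : (k.*2 <= N)%N ->
  (forall A, A \in F -> #|A| = k) -> (forall B, B \in H -> #|B| = k) ->
  cross F H -> F != set0 -> H != set0 ->
  (#|F| + #|H| <= 'C(N, k) - 'C(N - k, k) + 1)%N.
Proof.
move=> kN kF kH c Fn Hn.
have GN : forall A : {set T}, A \subset G N.
  by move=> A; apply/subsetP=> x _; rewrite inE ltn_ord.
apply: (@reduce k kN (wt F + wt H).+1) => // A /[dup] AF => [/kF|/kH] e; split => //.
Qed.

End Comb.

Import GRing.Theory.
Local Open Scope ring_scope.

Lemma bits_lt m (b : nat -> bool) : (\sum_(0 <= i < m) b i * 2 ^ i < 2 ^ m)%N.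
Proof.
elim: m => [|m IH]; first by rewrite big_geq.
rewrite big_nat_recr //= expnS; case: (b m) => /=; lia.
Qed.

Lemma bits_inj m (b c : nat -> bool) :
  (\sum_(0 <= i < m) b i * 2 ^ i)%N = (\sum_(0 <= i < m) c i * 2 ^ i)%N ->
  forall i, (i < m)%N -> b i = c i.
Proof.
elim: m => [|m IH] e i im; first by [].
rewrite !big_nat_recr //= in e.
have hb := bits_lt m b; have hc := bits_lt m c.
have bm : b m = c m.
  case Eb: (b m); case Ec: (c m) => //=; exfalso; move: e hb hc; rewrite Eb Ec /=; lia.
move: e; rewrite bm => /addIn e.
case: (ltngtP i m) => [lt|gt|->] //; first exact: IH.
lia.
Qed.

Section Alg.
Variables (F : fieldType) (n : nat).
Local Notation V := (ext F n).
Implicit Types (A B : {set 'I_n}) (x y : V).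

Definition w A := (\sum_(i in A) 2 ^ i)%N.

Definition bA A (i : nat) : bool := if insub i is Some x then x \in A else false.

Lemma w_bits A : w A = (\sum_(0 <= i < n) bA A i * 2 ^ i)%N.
Proof.
rewrite /w big_mkcond /= big_mkord; apply: eq_bigr => i _.
by rewrite /bA valK; case: (i \in A) => /=; rewrite ?mul1n ?mul0n.
Qed.

Lemma w_inj A B : w A = w B -> A = B.
Proof.
rewrite !w_bits => /bits_inj e; apply/setP=> x.
by have := e x (ltn_ord x); rewrite /bA valK.
Qed.

Lemma w_union A B : [disjoint A & B] -> w (A :|: B) = (w A + w B)%N.
Proof. by move=> d; rewrite /w -bigU //; apply: eq_bigl => i; rewrite !inE. Qed.


Definition is_lead x A := (x A != 0) && [forall B, (x B != 0) ==> (w B <= w A)%N].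

Lemma lead_exists x : x != 0 -> exists A, is_lead x A.
Proof.
move=> x0.
have [A0 xA0] : exists A0, x A0 != 0.
  apply/existsP; apply: contraNT x0 => /existsPn h; apply/eqP/ffunP => A.
  by have := h A; rewrite ffunE negbK => /eqP.
case: (@arg_maxnP _ A0 (fun A => x A != 0) w xA0) => A xA Amax.
exists A; rewrite /is_lead xA /=; apply/forallP=> B; apply/implyP; exact: Amax.
Qed.

Lemma lead_key x y a b A B : is_lead x a -> is_lead y b -> [disjoint a & b] ->
  [disjoint A & B] -> A :|: B = a :|: b -> x A != 0 -> y B != 0 -> A = a /\ B = b.
Proof.
move=> /andP[_ /forallP la] /andP[_ /forallP lb] dab dAB U xA yB.
have h1 := implyP (la A) xA; have h2 := implyP (lb B) yB.
have := w_union dAB; rewrite U w_union // => e.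
split; apply: w_inj; lia.
Qed.

Lemma wsign_neq0 A B : wsign F A B != 0.
Proof. by rewrite /wsign expf_neq0 // oppr_eq0 oner_eq0. Qed.

Lemma wedge_lead x y a b : is_lead x a -> is_lead y b -> [disjoint a & b] ->
  wedge x y (a :|: b) != 0.
Proof.
move=> la lb dab.
pose term A B : F := if [disjoint A & B] && (A :|: B == a :|: b)
     then wsign F A B * (x A : F) * (y B : F) else 0.
have t0 : forall A B, (A != a) || (B != b) -> term A B = 0.
  move=> A B ne; rewrite /term; case: ifP => // /andP[dAB /eqP U].
  case: (eqVneq (x A) 0) => [->|xA]; first by rewrite mulr0 mul0r.
  case: (eqVneq (y B) 0) => [->|yB]; first by rewrite mulr0.
  have [eA eB] := lead_key la lb dab dAB U xA yB.
  by move: ne; rewrite eA eB !eqxx.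
rewrite ffunE -/term.
rewrite (bigD1 a) //= (bigD1 b) //= big1 => [|B Bb]; last by apply: t0; rewrite Bb orbT.
rewrite addr0 big1 ?addr0 => [|A Aa]; last by apply: big1 => B _; apply: t0; rewrite Aa.
rewrite /term dab eqxx /= !mulf_neq0 ?wsign_neq0 //.
  by case/andP: la.
by case/andP: lb.
Qed.


Lemma deg_supp k x A : x \in ext_deg F n k -> x A != 0 -> #|A| = k.
Proof.
rewrite /ext_deg; set s := [seq _ | _ <- _] => xK xA.
have := coord_span (X := in_tuple s) xK => ex.
apply/eqP; apply: contraNT xA => Ak; apply/eqP.
rewrite ex sum_ffunE big1 // => i _; rewrite ffunE /=.
have : s`_i \in s by apply: mem_nth; exact: ltn_ord.
case/mapP=> B; rewrite mem_enum inE => /eqP Bk ->.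
rewrite ffunE; case: eqP => [eAB|_]; last by rewrite scaler0.
by move: Ak; rewrite eAB Bk eqxx.
Qed.

Definition asb (P : Prop) : bool := if excluded_middle_informative P then true else false.
Lemma asbP P : reflect P (asb P).
Proof. by rewrite /asb; case: excluded_middle_informative => h; constructor. Qed.

Definition fam (K : {vspace V}) : {set {set 'I_n}} :=
  [set A | asb (exists x, x \in K /\ is_lead x A)].

Section Dim.
Variable (S : {set {set 'I_n}}).
Definition proj (x : V) : V := [ffun C => if C \in S then x C else 0].
Lemma proj_lin : linear proj.
Proof.
move=> a u v; apply/ffunP=> C; rewrite !ffunE.
by case: ifP => _; rewrite ?ffunE ?scaler0 ?addr0.
Qed.
Definition projL : {linear V -> V} := HB.pack proj (GRing.isLinear.Build _ _ _ _ proj proj_lin).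
End Dim.

Lemma dim_fam (K : {vspace V}) : (\dim K <= #|fam K|)%N.
Proof.
set S := fam K; pose f := linfun (projL S).
have ker : (K :&: lker f = 0)%VS.
  apply/eqP; rewrite -subv0; apply/subvP => v; rewrite memv_cap memv_ker lfunE /=.
  case/andP=> vK /eqP pv; rewrite memv0; apply: contraT => v0.
  have [A lA] := lead_exists v0.
  have AS : A \in S by rewrite inE; apply/asbP; exists v.
  have := congr1 (fun g : V => g A) pv; rewrite /proj !ffunE AS => /eqP.
  by case/andP: lA => /negbTE ->.
rewrite -(limg_dim_eq ker).
have sub : (f @: K <= <<[seq ext_basis F C | C <- enum S]>>)%VS.
  apply/subvP=> u /memv_imgP[v vK ->]; rewrite lfunE /=.
  have sc : forall a b : F, a *: (b : F^o) = a * b by [].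
  have -> : proj S v = \sum_(C in S) v C *: ext_basis F C.
    apply/ffunP=> D; rewrite sum_ffunE ffunE.
    case: (boolP (D \in S)) => DS.
      rewrite (bigD1 D) //= big1 => [|C /andP[_ CD]]; rewrite !ffunE.
        by rewrite eqxx sc mulr1 addr0.
      by rewrite eq_sym (negbTE CD) sc mulr0.
    rewrite big1 // => C CS; rewrite !ffunE.
    by case: eqP => [e|_]; [move: DS; rewrite e CS | rewrite sc mulr0].
  apply: rpred_sum => C CS; apply: rpredZ; apply: memv_span.
  by apply: map_f; rewrite mem_enum.
apply: (leq_trans (dimvS sub)); apply: (leq_trans (dim_span _)).
by rewrite size_map cardE.
Qed.

End Alg.

Theorem theorem1p7 (F : fieldType) (n k : nat) (K L : {vspace ext F n}) :
  (2 \notin [pchar F])%N ->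
  (k.*2 <= n)%N ->
  (K <= ext_deg F n k)%VS -> (L <= ext_deg F n k)%VS ->
  K != 0%VS -> L != 0%VS ->
  (forall x y, x \in K -> y \in L -> wedge x y = 0) ->
  (\dim K + \dim L <= 'C(n, k) - 'C(n - k, k) + 1)%N.
Proof.
move=> _ kn KK LL K0 L0 hw.
have famk : forall (U : {vspace ext F n}), (U <= ext_deg F n k)%VS ->
    forall A, A \in fam U -> #|A| = k.
  move=> U UU A; rewrite inE => /asbP[x [xU /andP[xA _]]].
  exact: (deg_supp (subvP UU x xU) xA).
have famn : forall (U : {vspace ext F n}), U != 0%VS -> fam U != set0.
  move=> U U0; have : vpick U != 0 by rewrite vpick0.
  case/lead_exists=> A lA; apply/set0Pn; exists A; rewrite inE.
  by apply/asbP; exists (vpick U); split => //; apply: memv_pick.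
have c : cross (fam K) (fam L).
  move=> A B; rewrite !inE => /asbP[x [xK lA]] /asbP[y [yL lB]].
  apply/negP=> d; have := wedge_lead lA lB d.
  by rewrite hw // ffunE eqxx.
apply: (leq_trans (leq_add (dim_fam K) (dim_fam L))).
exact: (comb_final kn (famk _ KK) (famk _ LL) c (famn _ K0) (famn _ L0)).
Qed.
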